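(* Let $p\in(1,5)$ and $\beta(p)=(2(p+1))^{\frac1{p-1}}$. Then for all $x\in\mathbb{R}$: $$f_1(x,0)=f_3(-x,0)=-\beta(p)^{-1}\phi'(x),$$ $$\partial_\lambda f_1(x,0)=\beta(p)^{-1}\Big(\tfrac1{p-1}\phi'(x)+\Lambda_p\phi(x)\Big),\qquad\partial_\lambda f_3(x,0)=\beta(p)^{-1}\Big(\tfrac1{p-1}\phi'(x)-\Lambda_p\phi(x)\Big).$$
   Context: $\phi(x)=\left(\frac{p+1}{2}\right)^{\frac1{p-1}}\mathrm{sech}^{\frac2{p-1}}\left(\frac{p-1}2x\right)$, $\Lambda_p=\frac12x\partial_x+\frac1{p-1}$. For $\lambda$ near $0$, let $\mu_1(\lambda),\mu_2(\lambda),\mu_3(\lambda)$ be the roots of $\mu^3-\mu+\lambda=0$, analytic in $\lambda$, with $\mu_1(0)=-1,\mu_2(0)=0,\mu_3(0)=1$. Set $a_1=\frac1{(\mu_1-\mu_2)(\mu_1-\mu_3)}$, $a_2=\frac1{(\mu_2-\mu_1)(\mu_2-\mu_3)}$, $a_3=\frac1{(\mu_1-\mu_3)(\mu_2-\mu_3)}$. The Jost functions are $f_1(x,\lambda)=e^{\mu_1x}m_1(x,\lambda)$ and $f_3(x,\lambda)=e^{\mu_3x}m_3(x,\lambda)$, where $m_1,m_3$ are the bounded solutions of the Volterra equations $$m_1(x,\lambda)=1+\int_x^{\infty}\sum_{j=1}^3a_j\mu_je^{(\mu_j-\mu_1)(x-y)}\,p\phi(y)^{p-1}m_1(y,\lambda)\,dy,$$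 $$m_3(x,\lambda)=1-\int_{-\infty}^x\sum_{j=1}^3a_j\mu_je^{(\mu_j-\mu_3)(x-y)}\,p\phi(y)^{p-1}m_3(y,\lambda)\,dy;$$ these solve $\partial_x(-\partial_x^2+1-p\phi^{p-1})f=\lambda f$ and depend smoothly on $\lambda$. *)

(* Defs.v *)
From Stdlib Require Import Reals.
From Coquelicot Require Import Coquelicot.
Open Scope R_scope.

Definition sech (x : R) : R := 2 / (exp x + exp (- x)).

Definition phi (p x : R) : R :=
  Rpower ((p + 1) / 2) (1 / (p - 1)) * Rpower (sech ((p - 1) / 2 * x)) (2 / (p - 1)).

Definition Lambda_phi (p x : R) : R :=
  1 / 2 * x * Derive (phi p) x + 1 / (p - 1) * phi p x.

Definition beta (p : R) : R := Rpower (2 * (p + 1)) (1 / (p - 1)).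

Definition pot (p y : R) : R := p * Rpower (phi p y) (p - 1).

Definition a1 (m1 m2 m3 : R) : R := 1 / ((m1 - m2) * (m1 - m3)).
Definition a2 (m1 m2 m3 : R) : R := 1 / ((m2 - m1) * (m2 - m3)).
Definition a3 (m1 m2 m3 : R) : R := 1 / ((m1 - m3) * (m2 - m3)).

Definition kernel (m1 m2 m3 muk x y : R) : R :=
  a1 m1 m2 m3 * m1 * exp ((m1 - muk) * (x - y))
  + a2 m1 m2 m3 * m2 * exp ((m2 - muk) * (x - y))
  + a3 m1 m2 m3 * m3 * exp ((m3 - muk) * (x - y)).

(* mu1, mu2, mu3 are the branches of roots of mu^3 - mu + lambda = 0 on (-delta, delta),
   continuous, with mu1(0) = -1, mu2(0) = 0, mu3(0) = 1 (this determines them uniquely;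
   they are then analytic). *)
Definition root_branches (delta : R) (mu1 mu2 mu3 : R -> R) : Prop :=
  mu1 0 = -1 /\ mu2 0 = 0 /\ mu3 0 = 1 /\
  (forall l, Rabs l < delta ->
     mu1 l ^ 3 - mu1 l + l = 0 /\ mu2 l ^ 3 - mu2 l + l = 0 /\ mu3 l ^ 3 - mu3 l + l = 0 /\
     continuous mu1 l /\ continuous mu2 l /\ continuous mu3 l).

Definition is_m1 (p : R) (mu1 mu2 mu3 : R -> R) (l : R) (m : R -> R) : Prop :=
  (exists M, forall x, Rabs (m x) <= M) /\
  (forall x, is_RInt_gen
     (fun y => kernel (mu1 l) (mu2 l) (mu3 l) (mu1 l) x y * pot p y * m y)
     (at_point x) (Rbar_locally p_infty) (m x - 1)).

Definition is_m3 (p : R) (mu1 mu2 mu3 : R -> R) (l : R) (m : R -> R) : Prop :=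
  (exists M, forall x, Rabs (m x) <= M) /\
  (forall x, is_RInt_gen
     (fun y => kernel (mu1 l) (mu2 l) (mu3 l) (mu3 l) x y * pot p y * m y)
     (Rbar_locally m_infty) (at_point x) (1 - m x)).

(* Main.v *)
Require Import Defs.
From Stdlib Require Import Reals Lra.
From Coquelicot Require Import Coquelicot.
Open Scope R_scope.

Definition sE (p y : R) : R := exp (-(p-1)*y).
Definition Wf (p y : R) : R := exp (-(2/(p-1)) * ln (1 + sE p y)).

Lemma sE_pos p y : 0 < sE p y.
Proof. apply exp_pos. Qed.

Lemma beta_eq p : 1 < p -> beta p = exp (ln (2*(p+1)) / (p-1)).
Proof. intros. unfold beta, Rpower. f_equal. field. lra. Qed.

Lemma phi_eq p y : 1 < p -> phi p y = beta p * exp (-y) * Wf p y.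
Proof.
  intros Hp. rewrite beta_eq by lra. unfold phi, Wf, Rpower, sech, sE.
  set (a := (p-1)/2*y).
  assert (Hs : exp (-(p-1)*y) = exp (-a) * exp (-a)).
  { rewrite <- exp_plus. f_equal. unfold a. field. }
  assert (E1 : 2 / (exp a + exp (- a)) = 2 * exp (-a) / (1 + exp (-(p-1)*y))).
  { rewrite Hs. assert (exp a * exp (-a) = 1) by (rewrite <- exp_plus, Rplus_opp_r; apply exp_0).
    assert (0 < exp a) by apply exp_pos. assert (0 < exp (-a)) by apply exp_pos.
    field_simplify_eq; try nra. }
  rewrite E1.
  assert (0 < exp (-a)) by apply exp_pos. assert (0 < exp (-(p-1)*y)) by apply exp_pos.
  rewrite (ln_div (2 * exp (- a))) by (try apply Rmult_lt_0_compat; lra).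
  rewrite ln_mult, ln_exp by lra.
  rewrite (ln_div (p+1)) by lra. rewrite (ln_mult 2 (p+1)) by lra.
  rewrite <- !exp_plus. f_equal. unfold a. field. lra.
Qed.

Lemma Wf_pos p y : 0 < Wf p y.
Proof. apply exp_pos. Qed.

Lemma pot_eq p y : 1 < p -> pot p y = 2*p*(p+1) * sE p y / (1 + sE p y)^2.
Proof.
  intros Hp. unfold pot. rewrite phi_eq by lra. rewrite beta_eq by lra.
  unfold Rpower, Wf.
  assert (0 < sE p y) by apply sE_pos.
  rewrite !ln_mult by (try apply Rmult_lt_0_compat; apply exp_pos).
  rewrite !ln_exp.
  replace ((p - 1) * (ln (2 * (p + 1)) / (p - 1) + - y + - (2 / (p - 1)) * ln (1 + sE p y)))
    with (ln (2*(p+1)) + ln (sE p y) - 2 * ln (1 + sE p y)).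
  2:{ unfold sE. rewrite ln_exp. field. lra. }
  unfold Rminus. rewrite !exp_plus. rewrite !exp_ln by lra.
  replace (- (2 * ln (1 + sE p y))) with (-(ln (1 + sE p y)) + -(ln (1 + sE p y))) by ring.
  rewrite exp_plus. rewrite <- ln_Rinv by lra. rewrite exp_ln.
  2: apply Rinv_0_lt_compat; lra.
  field. lra.
Qed.

Lemma is_derive_psi p y : 1 < p ->
  is_derive (fun y => beta p * exp (-y) * Wf p y) y
    (beta p * exp (-y) * Wf p y * ((sE p y - 1) / (1 + sE p y))).
Proof.
  intros Hp. unfold Wf, sE.
  assert (0 < exp (-(p-1)*y)) by apply exp_pos.
  auto_derive. lra.
  field. lra.
Qed.

Lemma Derive_phi p y : 1 < p ->
  Derive (phi p) y = beta p * exp (-y) * Wf p y * ((sE p y - 1) / (1 + sE p y)).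
Proof.
  intros Hp. rewrite (Derive_ext _ (fun y => beta p * exp (-y) * Wf p y)).
  2: intros; apply phi_eq; lra.
  apply is_derive_unique. apply is_derive_psi; auto.
Qed.

Lemma lim_exp_lin a b : a < 0 -> is_lim (fun y => exp (a*y + b)) p_infty 0.
Proof.
  intros Ha. apply (is_lim_comp_lin exp a b p_infty 0).
  2: lra.
  replace (Rbar_plus (Rbar_mult a p_infty) b) with m_infty. apply is_lim_exp_m.
  rewrite Rbar_mult_comm. simpl.
  case Rle_dec; intro Hd; [exfalso; lra|]. reflexivity.
Qed.

Lemma lim_to_eps f l : is_lim f p_infty (Finite l) ->
  forall eta, 0 < eta -> exists B, forall b, B < b -> Rabs (f b - l) < eta.
Proof.
  intros H eta He. apply is_lim_spec in H. specialize (H (mkposreal eta He)).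
  destruct H as [M HM]. exists M. intros. apply HM; auto.
Qed.
Definition Vf p y := 2*p*(p+1) * sE p y / (1 + sE p y)^2.
Definition m0f p y := (1 - sE p y)/(1 + sE p y) * Wf p y.
Definition mdf p y := 2/(p-1) * sE p y / (1 + sE p y) * Wf p y.
Definition K0 x y := (exp (x-y)^2 - 1)/2.
Definition Kd x y := (1 - exp (x-y))^2/2.
Definition F0 p x y := K0 x y * Vf p y * m0f p y.
Definition Fd p x y := Kd x y * Vf p y * m0f p y + K0 x y * Vf p y * mdf p y.
Definition Rq1 p y := (sE p y - 1)/(1 + sE p y).
Definition Rq2 p y := 1 - 2*(p+1)*sE p y/(1 + sE p y)^2.
Definition G0 p x y := -(1/2) * (exp (x-y)^2 * Wf p y * (- Rq2 p y - Rq1 p y) - Wf p y * (Rq1 p y - Rq2 p y)).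
Definition Gd p x y := let q := 1/(p-1) in
  Wf p y * ((- q*p/2 + (1+q)/2 * Rq2 p y) + exp (x-y) * (1 - Rq2 p y)
            + exp (x-y)^2 * (- q*p/2 - q * Rq1 p y + (1-q)/2 * Rq2 p y)).

Lemma G0_deriv p x y : 1 < p -> is_derive (G0 p x) y (F0 p x y).
Proof.
  intros Hp. unfold G0, F0, K0, Vf, m0f, Rq1, Rq2, Wf, sE.
  assert (0 < exp (-(p-1)*y)) by apply exp_pos.
  auto_derive. repeat split; try apply Rgt_not_eq; try nra.
  change (exp (x + - y)) with (exp (x - y)). set (E := exp (x - y)). set (S := exp (-(p-1)*y)). set (W := exp (- (2 / (p - 1)) * ln (1 + S))).
  assert (0 < S) by apply exp_pos. field. split; lra.
Qed.

Lemma Gd_deriv p x y : 1 < p -> is_derive (Gd p x) y (Fd p x y).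
Proof.
  intros Hp. unfold Gd, Fd, Kd, K0, Vf, m0f, mdf, Rq1, Rq2, Wf, sE.
  assert (0 < exp (-(p-1)*y)) by apply exp_pos.
  auto_derive. repeat split; try apply Rgt_not_eq; try nra.
  change (exp (x + - y)) with (exp (x - y)). set (E := exp (x - y)). set (S := exp (-(p-1)*y)). set (W := exp (- (2 / (p - 1)) * ln (1 + S))).
  assert (0 < S) by apply exp_pos. field. split; lra.
Qed.

Lemma is_lim_mult_fin f g x (a b : R) : is_lim f x a -> is_lim g x b ->
  is_lim (fun y => f y * g y) x (a * b).
Proof.
  intros Hf Hg. apply (is_lim_mult f g x a b Hf Hg). exact I.
Qed.

Lemma lim_sE p : 1 < p -> is_lim (sE p) p_infty 0.
Proof.
  intros Hp. apply (is_lim_ext (fun y => exp (-(p-1)*y + 0))).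
  intros y. unfold sE. f_equal. ring.
  apply lim_exp_lin. lra.
Qed.

Lemma lim_Es x : is_lim (fun y => exp (x - y)) p_infty 0.
Proof.
  apply (is_lim_ext (fun y => exp ((-1)*y + x))).
  intros y. f_equal. ring.
  apply lim_exp_lin. lra.
Qed.

Lemma lim_H p (H : R -> R) : 1 < p -> continuous H 0 ->
  is_lim (fun y => H (sE p y)) p_infty (H 0).
Proof.
  intros Hp Hc. apply is_lim_comp_continuous; auto. apply lim_sE; auto.
Qed.

Definition Wz p z := exp (-(2/(p-1)) * ln (1 + z)).
Definition Ha p z := -(1/2) * Wz p z * (-(1 - 2*(p+1)*z/(1+z)^2) - (z-1)/(1+z)).
Definition Hb p z := (1/2) * Wz p z * ((z-1)/(1+z) - (1 - 2*(p+1)*z/(1+z)^2)).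

Lemma G0_lim p x : 1 < p -> is_lim (G0 p x) p_infty (-1).
Proof.
  intros Hp.
  apply (is_lim_ext (fun y => (exp (x-y) * exp (x-y)) * Ha p (sE p y) + Hb p (sE p y))).
  { intros y. unfold G0, Ha, Hb, Wz, Rq1, Rq2, Wf. ring. }
  replace (-1) with (0*0 * Ha p 0 + Hb p 0).
  2:{ unfold Hb, Wz. replace (1+0) with 1 by ring. rewrite ln_1. replace (-(2/(p-1))*0) with 0 by ring. rewrite exp_0. field. }
  apply (is_lim_plus' (fun y => (exp (x-y) * exp (x-y)) * Ha p (sE p y)) (fun y => Hb p (sE p y))).
  apply (is_lim_mult_fin (fun y => exp (x-y) * exp (x-y)) (fun y => Ha p (sE p y))).
  apply (is_lim_mult_fin (fun y => exp (x-y)) (fun y => exp (x-y))); apply lim_Es.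
  apply (lim_H p (Ha p)); auto. apply (ex_derive_continuous (Ha p)). unfold Ha, Wz. auto_derive. repeat split; lra.
  apply (lim_H p (Hb p)); auto. apply (ex_derive_continuous (Hb p)). unfold Hb, Wz. auto_derive. repeat split; lra.
Qed.

Definition Hc p z := let q := 1/(p-1) in Wz p z * (- q*p/2 + (1+q)/2 * (1 - 2*(p+1)*z/(1+z)^2)).
Definition Hd p z := Wz p z * (1 - (1 - 2*(p+1)*z/(1+z)^2)).
Definition He p z := let q := 1/(p-1) in
  Wz p z * (- q*p/2 - q * ((z-1)/(1+z)) + (1-q)/2 * (1 - 2*(p+1)*z/(1+z)^2)).

Lemma Gd_lim p x : 1 < p -> is_lim (Gd p x) p_infty 0.
Proof.
  intros Hp.
  apply (is_lim_ext (fun y => (Hc p (sE p y) + exp (x-y) * Hd p (sE p y)) + (exp (x-y) * exp (x-y)) * He p (sE p y))).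
  { intros y. unfold Gd, Hc, Hd, He, Wz, Rq1, Rq2, Wf. simpl. ring. }
  replace 0 with ((Hc p 0 + 0 * Hd p 0) + 0*0 * He p 0) at 1.
  2:{ unfold Hc, Wz. replace (1+0) with 1 by ring. rewrite ln_1. replace (-(2/(p-1))*0) with 0 by ring. rewrite exp_0. field. lra. }
  apply (is_lim_plus' (fun y => Hc p (sE p y) + exp (x-y) * Hd p (sE p y)) (fun y => (exp (x-y) * exp (x-y)) * He p (sE p y))).
  apply (is_lim_plus' (fun y => Hc p (sE p y)) (fun y => exp (x-y) * Hd p (sE p y))).
  apply (lim_H p (Hc p)); auto. apply (ex_derive_continuous (Hc p)). unfold Hc, Wz. auto_derive. repeat split; lra.
  apply (is_lim_mult_fin (fun y => exp (x-y)) (fun y => Hd p (sE p y))). apply lim_Es.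
  apply (lim_H p (Hd p)); auto. apply (ex_derive_continuous (Hd p)). unfold Hd, Wz. auto_derive. repeat split; lra.
  apply (is_lim_mult_fin (fun y => exp (x-y) * exp (x-y)) (fun y => He p (sE p y))).
  apply (is_lim_mult_fin (fun y => exp (x-y)) (fun y => exp (x-y))); apply lim_Es.
  apply (lim_H p (He p)); auto. apply (ex_derive_continuous (He p)). unfold He, Wz. auto_derive. repeat split; lra.
Qed.

Lemma G0_x p x : 1 < p -> G0 p x x = - m0f p x.
Proof.
  intros Hp. unfold G0, m0f, Rq1, Rq2. replace (x - x) with 0 by ring. rewrite exp_0.
  assert (0 < sE p x) by apply sE_pos. field. lra.
Qed.

Lemma Gd_x p x : 1 < p -> Gd p x x = - mdf p x.
Proof.
  intros Hp. unfold Gd, mdf, Rq1, Rq2. replace (x - x) with 0 by ring. rewrite exp_0.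
  assert (0 < sE p x) by apply sE_pos. simpl. field. lra.
Qed.

Lemma F0_cont p x y : 1 < p -> continuous (F0 p x) y.
Proof.
  intros Hp. apply (ex_derive_continuous (F0 p x)). unfold F0, K0, Vf, m0f, Wf, sE.
  assert (0 < exp (-(p-1)*y)) by apply exp_pos.
  auto_derive. repeat split; try apply Rgt_not_eq; nra.
Qed.

Lemma Fd_cont p x y : 1 < p -> continuous (Fd p x) y.
Proof.
  intros Hp. apply (ex_derive_continuous (Fd p x)). unfold Fd, Kd, K0, Vf, m0f, mdf, Wf, sE.
  assert (0 < exp (-(p-1)*y)) by apply exp_pos.
  auto_derive. repeat split; try apply Rgt_not_eq; nra.
Qed.

Lemma F0_int p x b : 1 < p -> is_RInt (F0 p x) x b (G0 p x b + m0f p x).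
Proof.
  intros Hp. replace (G0 p x b + m0f p x) with (minus (G0 p x b) (G0 p x x)).
  2:{ rewrite G0_x by auto. unfold minus, plus, opp. simpl. ring. }
  apply (is_RInt_derive (G0 p x) (F0 p x)). intros; apply G0_deriv; auto. intros; apply F0_cont; auto.
Qed.

Lemma Fd_int p x b : 1 < p -> is_RInt (Fd p x) x b (Gd p x b + mdf p x).
Proof.
  intros Hp. replace (Gd p x b + mdf p x) with (minus (Gd p x b) (Gd p x x)).
  2:{ rewrite Gd_x by auto. unfold minus, plus, opp. simpl. ring. }
  apply (is_RInt_derive (Gd p x) (Fd p x)). intros; apply Gd_deriv; auto. intros; apply Fd_cont; auto.
Qed.

Lemma exp_le_mono a b : a <= b -> exp a <= exp b.
Proof. intros [H|H]. left; apply exp_increasing; auto. subst; lra. Qed.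

Lemma exp_ge1 a : 0 <= a -> 1 <= exp a.
Proof. intros. rewrite <- exp_0. apply exp_le_mono; auto. Qed.

Definition Cv p := 2*p*(p+1)/(p-1).
Definition Uf p y := Cv p * (sE p y / (1 + sE p y)).

Lemma Uf_bounds p y : 1 < p -> 0 <= Uf p y <= Cv p.
Proof.
  intros Hp. unfold Uf, Cv. assert (0 < sE p y) by apply sE_pos.
  assert (0 < 2*p*(p+1)/(p-1)) by (apply Rdiv_lt_0_compat; nra).
  assert (0 <= sE p y / (1 + sE p y) <= 1).
  { assert (E : sE p y / (1 + sE p y) = 1 - 1/(1 + sE p y)) by (field; lra).
    assert (0 < 1/(1 + sE p y)) by (apply Rdiv_lt_0_compat; lra).
    split. apply Rdiv_le_0_compat; lra. lra. }
  split; nra.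
Qed.

Lemma Vf_nonneg p y : 1 < p -> 0 <= Vf p y.
Proof.
  intros Hp. unfold Vf. assert (0 < sE p y) by apply sE_pos.
  apply Rdiv_le_0_compat. apply Rmult_le_pos; [|lra]. nra. nra.
Qed.

Lemma maj_int p c L x b : 1 < p -> 0 < L ->
  is_RInt (fun y => c * Vf p y * exp (L * Uf p y)) x b
    (c / L * (exp (L * Uf p x) - exp (L * Uf p b))).
Proof.
  intros Hp HL.
  set (G := fun y => - (c / L) * exp (L * Uf p y)).
  replace (c / L * (exp (L * Uf p x) - exp (L * Uf p b))) with (minus (G b) (G x)).
  2:{ unfold G, minus, plus, opp; simpl. ring. }
  apply (is_RInt_derive G).
  - intros y _. unfold G, Uf, Cv, Vf, sE. assert (0 < exp (-(p-1)*y)) by apply exp_pos.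
    auto_derive. lra. unfold Rdiv. field. split; lra.
  - intros y _. apply (ex_derive_continuous (fun y => c * Vf p y * exp (L * Uf p y))).
    unfold Uf, Cv, Vf, sE. assert (0 < exp (-(p-1)*y)) by apply exp_pos.
    auto_derive. repeat split; try apply Rgt_not_eq; nra.
Qed.


Lemma volterra_step p (K : R -> R -> R) (r : R -> R) sig Km Rb :
  1 < p -> 0 < Km -> 0 <= sig -> 0 <= Rb ->
  (forall x y, x <= y -> Rabs (K x y) <= Km) ->
  (forall x eta, 0 < eta -> exists b, x < b /\
     ex_RInt (fun y => K x y * Vf p y * r y) x b /\
     Rabs (r x - RInt (fun y => K x y * Vf p y * r y) x b) <= sig + eta) ->
  (forall y, Rabs (r y) <= Rb * exp (2*Km * Uf p y)) ->
  forall x, Rabs (r x) <= (sig + Rb/2) * exp (2*Km * Uf p x).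
Proof.
  intros Hp HK Hs HR HKb Hrep Hr x.
  assert (HE : 1 <= exp (2*Km*Uf p x)).
  { apply exp_ge1. pose proof (Uf_bounds p x Hp). nra. }
  assert (Hmain : Rabs (r x) <= sig + Rb/2 * (exp (2*Km*Uf p x) - 1)).
  { apply Rle_plus_epsilon. intros eta He.
    destruct (Hrep x eta He) as [b [Hxb [Hex Hb]]].
    assert (Hint : Rabs (RInt (fun y => K x y * Vf p y * r y) x b) <=
             Km * Rb / (2*Km) * (exp (2*Km * Uf p x) - exp (2*Km * Uf p b))).
    { apply (norm_RInt_le (fun y => K x y * Vf p y * r y)
              (fun y => Km * Rb * Vf p y * exp (2*Km * Uf p y)) x b).
      lra.
      - intros y Hy. change norm with Rabs. simpl.
        rewrite !Rabs_mult. pose proof (Vf_nonneg p y Hp).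
        rewrite (Rabs_pos_eq (Vf p y)) by auto.
        pose proof (HKb x y (proj1 Hy)). pose proof (Hr y).
        pose proof (Rabs_pos (K x y)). pose proof (Rabs_pos (r y)).
        assert (Rabs (K x y) * Vf p y <= Km * Vf p y) by nra.
        assert (Rabs (K x y) * Vf p y * Rabs (r y) <= Km * Vf p y * (Rb * exp (2 * Km * Uf p y))).
        { apply Rmult_le_compat; nra. }
        nra.
      - apply (RInt_correct (fun y => K x y * Vf p y * r y)); auto.
      - apply maj_int; auto. lra. }
    assert (exp (2*Km*Uf p b) >= 1).
    { apply Rle_ge, exp_ge1. pose proof (Uf_bounds p b Hp). nra. }
    replace (Km * Rb / (2*Km)) with (Rb/2) in Hint by (field; lra).
    pose proof (Rabs_triang_inv (r x) (RInt (fun y => K x y * Vf p y * r y) x b)).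
    assert (Rb / 2 * (exp (2 * Km * Uf p x) - exp (2 * Km * Uf p b)) <= Rb/2 * (exp (2 * Km * Uf p x) - 1)).
    { apply Rmult_le_compat_l; lra. }
    lra. }
  assert (sig <= sig * exp (2*Km*Uf p x)) by nra.
  nra.
Qed.

Lemma volterra p (K : R -> R -> R) (r : R -> R) sig Km M :
  1 < p -> 0 < Km -> 0 <= sig ->
  (forall y, Rabs (r y) <= M) ->
  (forall x y, x <= y -> Rabs (K x y) <= Km) ->
  (forall x eta, 0 < eta -> exists b, x < b /\
     ex_RInt (fun y => K x y * Vf p y * r y) x b /\
     Rabs (r x - RInt (fun y => K x y * Vf p y * r y) x b) <= sig + eta) ->
  forall x, Rabs (r x) <= 2 * sig * exp (2*Km * Cv p).
Proof.
  intros Hp HK Hs HM HKb Hrep.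
  assert (HM0 : 0 <= M) by (pose proof (HM 0); pose proof (Rabs_pos (r 0)); lra).
  assert (Hit : forall n y, Rabs (r y) <= (2*sig + M * (/2)^n) * exp (2*Km * Uf p y)).
  { induction n; intros y.
    - simpl. assert (1 <= exp (2*Km*Uf p y)).
      { apply exp_ge1. pose proof (Uf_bounds p y Hp). nra. }
      pose proof (HM y). nra.
    - replace (2*sig + M * (/2)^(S n)) with (sig + (2*sig + M*(/2)^n)/2) by (simpl; field).
      apply (volterra_step p K r); auto.
      assert (0 <= (/2)^n) by (apply pow_le; lra). nra. }
  intros x.
  assert (HE : exp (2*Km*Uf p x) <= exp (2*Km*Cv p)).
  { apply exp_le_mono. pose proof (Uf_bounds p x Hp). nra. }
  assert (Hx : Rabs (r x) <= 2*sig * exp (2*Km*Uf p x)).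
  { apply Rle_plus_epsilon. intros eps He.
    assert (HEp : 0 < exp (2*Km*Uf p x)) by apply exp_pos.
    destruct (pow_lt_1_zero (/2)) with (y := eps / ((M+1) * exp (2*Km*Uf p x))) as [N HN].
    rewrite Rabs_pos_eq; lra.
    apply Rdiv_lt_0_compat; nra.
    specialize (HN N (Nat.le_refl N)). rewrite Rabs_pos_eq in HN by (apply pow_le; lra).
    specialize (Hit N x).
    assert (0 <= (/2)^N) by (apply pow_le; lra).
    assert (M * (/ 2) ^ N * exp (2 * Km * Uf p x) <= eps).
    { apply Rlt_le in HN.
      apply (Rmult_le_compat_r ((M+1) * exp (2*Km*Uf p x))) in HN; [|nra].
      replace (eps / ((M + 1) * exp (2 * Km * Uf p x)) * ((M + 1) * exp (2 * Km * Uf p x))) with eps in HN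
        by (field; nra).
      nra. }
    nra. }
  nra.
Qed.

Lemma cont_eps (f : R -> R) x : continuous f x ->
  forall eps, 0 < eps -> exists d, 0 < d /\ forall y, Rabs (y - x) < d -> Rabs (f y - f x) < eps.
Proof.
  intros Hc eps He.
  destruct (proj1 (filterlim_locally f (f x)) Hc (mkposreal eps He)) as [d Hd].
  exists d. split. apply cond_pos. intros y Hy. apply Hd. exact Hy.
Qed.

Lemma mu_deriv (mu : R -> R) (delta m0 : R) : 0 < delta -> mu 0 = m0 -> m0^3 - m0 = 0 ->
  3*m0^2 - 1 <> 0 ->
  (forall l, Rabs l < delta -> mu l ^ 3 - mu l + l = 0) -> continuous mu 0 ->
  is_derive mu 0 (-1/(3*m0^2 - 1)).
Proof.
  intros Hd H0 Hm0 Hnz Hroot Hc.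
  apply is_derive_Reals. intros eps He.
  set (D := 3*m0^2 - 1).
  assert (Hg : continuous (fun h => mu h ^ 2 + mu h * m0 + m0^2 - 1) 0).
  { apply (continuous_minus (fun h => mu h ^ 2 + mu h * m0 + m0^2) (fun _ => 1)).
    apply (continuous_plus (fun h => mu h ^ 2 + mu h * m0) (fun _ => m0^2)).
    apply (continuous_plus (fun h => mu h ^ 2) (fun h => mu h * m0)).
    apply (continuous_comp mu (fun z => z^2)); auto.
    apply (ex_derive_continuous (fun z => z^2)). auto_derive. auto.
    apply (continuous_mult mu (fun _ => m0)); auto. apply continuous_const.
    apply continuous_const. apply continuous_const. }
  assert (Hg0 : mu 0 ^ 2 + mu 0 * m0 + m0^2 - 1 = D) by (rewrite H0; unfold D; ring).
  assert (HDpos : 0 < Rabs D) by (apply Rabs_pos_lt; auto).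
  assert (Hinv : continuous (fun h => -1 / (mu h ^ 2 + mu h * m0 + m0^2 - 1)) 0).
  { apply (continuous_comp (fun h => mu h ^ 2 + mu h * m0 + m0^2 - 1) (fun z => -1/z)); auto.
    apply (ex_derive_continuous (fun z => -1/z)). auto_derive. rewrite Hg0. auto. }
  destruct (cont_eps _ 0 Hinv eps He) as [d1 [Hd1 Hd1']].
  exists (mkposreal (Rmin d1 delta) (Rmin_pos _ _ Hd1 Hd))%R.
  intros h Hh0 Hh. simpl in Hh.
  assert (Hh1 : Rabs (h - 0) < d1) by (rewrite Rminus_0_r; apply Rlt_le_trans with (1:=Hh); apply Rmin_l).
  assert (Hh2 : Rabs h < delta) by (apply Rlt_le_trans with (1:=Hh); apply Rmin_r).
  specialize (Hd1' h Hh1). rewrite Hg0 in Hd1'.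
  pose proof (Hroot h Hh2) as Hr.
  rewrite Rplus_0_l. rewrite H0.
  set (g := mu h ^ 2 + mu h * m0 + m0 ^ 2 - 1) in *.
  assert (Hfac : (mu h - m0) * g = - h).
  { unfold g. replace (-h) with ((mu h ^3 - mu h) - (m0^3 - m0)) by lra. ring. }
  destruct (Req_dec g 0) as [Hg00|Hgnz].
  { exfalso. rewrite Hg00 in Hfac. apply Hh0. lra. }
  replace ((mu h - m0) / h) with (-1/g).
  2:{ field_simplify_eq; auto. lra. }
  unfold D in Hd1'. exact Hd1'.
Qed.

Lemma deriv_o f v : is_derive f 0 v ->
  forall eps, 0 < eps -> exists d, 0 < d /\ forall l, Rabs l < d -> Rabs (f l - f 0 - l * v) <= eps * Rabs l.
Proof.
  intros Hf eps He. apply is_derive_Reals in Hf. destruct (Hf eps He) as [d Hd].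
  exists d. split. apply cond_pos. intros l Hl.
  destruct (Req_dec l 0) as [->|Hl0].
  { replace (f 0 - f 0 - 0 * v) with 0 by ring. rewrite Rabs_R0. lra. }
  specialize (Hd l Hl0 Hl). rewrite Rplus_0_l in Hd.
  replace (f l - f 0 - l * v) with (l * ((f l - f 0)/l - v)) by (field; auto).
  rewrite Rabs_mult. rewrite (Rmult_comm eps). apply Rmult_le_compat_l. apply Rabs_pos. lra.
Qed.


Lemma mu1_der (delta : R) (mu1 mu2 mu3 : R -> R) (Hd : 0 < delta) (Hrb : root_branches delta mu1 mu2 mu3) : is_derive mu1 0 (-1/2).
Proof.
  pose proof Hrb as [H1 [H2 [H3 H]]].
  replace (-1/2) with (-1/(3*(-1)^2 - 1)) by field.
  apply (mu_deriv mu1 delta); auto. ring. intro; lra.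
  intros l Hl; apply (H l Hl). assert (Rabs 0 < delta) by (rewrite Rabs_R0; auto). apply (H 0 H0).
Qed.
Lemma mu2_der (delta : R) (mu1 mu2 mu3 : R -> R) (Hd : 0 < delta) (Hrb : root_branches delta mu1 mu2 mu3) : is_derive mu2 0 1.
Proof.
  pose proof Hrb as [H1 [H2 [H3 H]]].
  replace 1 with (-1/(3*0^2 - 1)) by field.
  apply (mu_deriv mu2 delta); auto. ring. intro; lra.
  intros l Hl; apply (H l Hl). assert (Rabs 0 < delta) by (rewrite Rabs_R0; auto). apply (H 0 H0).
Qed.
Lemma mu3_der (delta : R) (mu1 mu2 mu3 : R -> R) (Hd : 0 < delta) (Hrb : root_branches delta mu1 mu2 mu3) : is_derive mu3 0 (-1/2).
Proof.
  pose proof Hrb as [H1 [H2 [H3 H]]].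
  replace (-1/2) with (-1/(3*1^2 - 1)) by field.
  apply (mu_deriv mu3 delta); auto. ring. intro; lra.
  intros l Hl; apply (H l Hl). assert (Rabs 0 < delta) by (rewrite Rabs_R0; auto). apply (H 0 H0).
Qed.

Lemma b1_der (delta : R) (mu1 mu2 mu3 : R -> R) (Hd : 0 < delta) (Hrb : root_branches delta mu1 mu2 mu3) : is_derive (fun l => a1 (mu1 l) (mu2 l) (mu3 l) * mu1 l) 0 (1/2).
Proof.
  pose proof Hrb as [H1 [H2 [H3 H]]].
  pose proof (mu1_der delta mu1 mu2 mu3 Hd Hrb). pose proof (mu2_der delta mu1 mu2 mu3 Hd Hrb). pose proof (mu3_der delta mu1 mu2 mu3 Hd Hrb).
  unfold a1. auto_derive.
  - repeat split; try (eexists; eauto). rewrite H1, H2, H3. lra.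
  - assert (D1 : Derive (fun x : R => mu1 x) 0 = -1/2) by (apply is_derive_unique; auto).
    assert (D2 : Derive (fun x : R => mu2 x) 0 = 1) by (apply is_derive_unique; auto).
    assert (D3 : Derive (fun x : R => mu3 x) 0 = -1/2) by (apply is_derive_unique; auto).
    rewrite D1, D2, D3.
    rewrite H1, H2, H3. field.
Qed.

Lemma b2_der (delta : R) (mu1 mu2 mu3 : R -> R) (Hd : 0 < delta) (Hrb : root_branches delta mu1 mu2 mu3) : is_derive (fun l => a2 (mu1 l) (mu2 l) (mu3 l) * mu2 l) 0 (-1).
Proof.
  pose proof Hrb as [H1 [H2 [H3 H]]].
  pose proof (mu1_der delta mu1 mu2 mu3 Hd Hrb). pose proof (mu2_der delta mu1 mu2 mu3 Hd Hrb). pose proof (mu3_der delta mu1 mu2 mu3 Hd Hrb).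
  unfold a2. auto_derive.
  - repeat split; try (eexists; eauto). rewrite H1, H2, H3. lra.
  - assert (D1 : Derive (fun x : R => mu1 x) 0 = -1/2) by (apply is_derive_unique; auto).
    assert (D2 : Derive (fun x : R => mu2 x) 0 = 1) by (apply is_derive_unique; auto).
    assert (D3 : Derive (fun x : R => mu3 x) 0 = -1/2) by (apply is_derive_unique; auto).
    rewrite D1, D2, D3. rewrite H1, H2, H3. field.
Qed.

Lemma b3_der (delta : R) (mu1 mu2 mu3 : R -> R) (Hd : 0 < delta) (Hrb : root_branches delta mu1 mu2 mu3) : is_derive (fun l => a3 (mu1 l) (mu2 l) (mu3 l) * mu3 l) 0 (1/2).
Proof.
  pose proof Hrb as [H1 [H2 [H3 H]]].
  pose proof (mu1_der delta mu1 mu2 mu3 Hd Hrb). pose proof (mu2_der delta mu1 mu2 mu3 Hd Hrb). pose proof (mu3_der delta mu1 mu2 mu3 Hd Hrb).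
  unfold a3. auto_derive.
  - repeat split; try (eexists; eauto). rewrite H1, H2, H3. lra.
  - assert (D1 : Derive (fun x : R => mu1 x) 0 = -1/2) by (apply is_derive_unique; auto).
    assert (D2 : Derive (fun x : R => mu2 x) 0 = 1) by (apply is_derive_unique; auto).
    assert (D3 : Derive (fun x : R => mu3 x) 0 = -1/2) by (apply is_derive_unique; auto).
    rewrite D1, D2, D3. rewrite H1, H2, H3. field.
Qed.

Lemma c3_der (delta : R) (mu1 mu2 mu3 : R -> R) (Hd : 0 < delta) (Hrb : root_branches delta mu1 mu2 mu3) : is_derive (fun l => mu3 l - mu1 l) 0 0.
Proof.
  pose proof (mu1_der delta mu1 mu2 mu3 Hd Hrb). pose proof (mu3_der delta mu1 mu2 mu3 Hd Hrb).
  auto_derive.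
  - split; [eexists; eauto|split; [eexists; eauto|auto]].
  - assert (D1 : Derive (fun x : R => mu1 x) 0 = -1/2) by (apply is_derive_unique; auto).
    assert (D3 : Derive (fun x : R => mu3 x) 0 = -1/2) by (apply is_derive_unique; auto).
    rewrite D1, D3. field.
Qed.

Lemma c2_cont (delta : R) (mu1 mu2 mu3 : R -> R) (Hd : 0 < delta) (Hrb : root_branches delta mu1 mu2 mu3) : continuous (fun l => mu2 l - mu1 l) 0.
Proof.
  pose proof Hrb as [H1 [H2 [H3 H]]].
  assert (Rabs 0 < delta) by (rewrite Rabs_R0; auto).
  destruct (H 0 H0) as [_ [_ [_ [c1 [c2 c3]]]]].
  apply (continuous_minus mu2 mu1); auto.
Qed.


Lemma exp_le1 c t : 0 <= c -> t <= 0 -> 0 < exp (c*t) <= 1.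
Proof.
  intros. split. apply exp_pos. rewrite <- exp_0. apply exp_le_mono. nra.
Qed.

Lemma exp_sub_le u v : v <= u -> 0 <= exp u - exp v <= (u - v) * exp u.
Proof.
  intros H. split.
  - pose proof (exp_le_mono _ _ H). lra.
  - pose proof (exp_ineq1_le (v - u)).
    assert (exp v = exp u * exp (v - u)) by (rewrite <- exp_plus; f_equal; ring).
    pose proof (exp_pos u). nra.
Qed.

Lemma t_exp_bound t : t <= 0 -> - t * exp (t/2) <= 2.
Proof.
  intros Ht. pose proof (exp_ineq1_le (-t/2)).
  assert (exp (t/2) * exp (-t/2) = 1) by (rewrite <- exp_plus; replace (t/2 + -t/2) with 0 by field; apply exp_0).
  pose proof (exp_pos (t/2)). nra.
Qed.

Lemma exp_diff a b t : 1/2 <= a -> 1/2 <= b -> t <= 0 ->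
  Rabs (exp (a*t) - exp (b*t)) <= 2 * Rabs (a - b).
Proof.
  intros Ha Hb Ht.
  assert (Key : forall a b, 1/2 <= a -> a <= b -> Rabs (exp (a*t) - exp (b*t)) <= 2 * Rabs (a - b)).
  { clear a b Ha Hb. intros a b Ha Hab.
    destruct (exp_sub_le (a*t) (b*t)) as [H1 H2]. nra.
    rewrite Rabs_pos_eq by lra. rewrite Rabs_minus_sym, Rabs_pos_eq by lra.
    assert (exp (a*t) <= exp (t/2)) by (apply exp_le_mono; nra).
    pose proof (t_exp_bound t Ht). pose proof (exp_pos (a*t)).
    assert ((a*t - b*t) * exp (a*t) = (b - a) * (-t * exp (a*t))) by ring.
    assert (-t * exp (a*t) <= 2) by nra.
    nra. }
  destruct (Rle_dec a b). apply Key; auto.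
  rewrite Rabs_minus_sym, (Rabs_minus_sym a). apply Key; lra.
Qed.

Definition Kl (mu1 mu2 mu3 : R -> R) l x y := kernel (mu1 l) (mu2 l) (mu3 l) (mu1 l) x y.

Lemma kernel_est delta mu1 mu2 mu3 : 0 < delta -> root_branches delta mu1 mu2 mu3 ->
  forall eps, 0 < eps -> exists d, 0 < d /\ d <= 1 /\ forall l, Rabs l < d -> forall x y, x <= y ->
    Rabs (Kl mu1 mu2 mu3 l x y - K0 x y - l * Kd x y) <= eps * Rabs l.
Proof.
  intros Hd Hrb eps He.
  pose proof Hrb as [H1 [H2 [H3 _]]].
  set (e := Rmin (eps/7) (1/2)).
  assert (He1 : 0 < e) by (apply Rmin_pos; lra).
  assert (He2 : e <= eps/7) by apply Rmin_l.
  assert (He3 : e <= 1/2) by apply Rmin_r.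
  destruct (deriv_o _ _ (b1_der delta mu1 mu2 mu3 Hd Hrb) e He1) as [d1 [Hd1 B1]].
  destruct (deriv_o _ _ (b2_der delta mu1 mu2 mu3 Hd Hrb) e He1) as [d2 [Hd2 B2]].
  destruct (deriv_o _ _ (b3_der delta mu1 mu2 mu3 Hd Hrb) e He1) as [d3 [Hd3 B3]].
  destruct (deriv_o _ _ (c3_der delta mu1 mu2 mu3 Hd Hrb) e He1) as [d4 [Hd4 B4]].
  destruct (cont_eps _ 0 (c2_cont delta mu1 mu2 mu3 Hd Hrb) e He1) as [d5 [Hd5 B5]].
  set (d := Rmin (Rmin (Rmin d1 d2) (Rmin d3 d4)) (Rmin d5 1)).
  assert (Hdd : 0 < d) by (repeat apply Rmin_pos; lra).
  exists d. split; [auto|split]. unfold d. eapply Rle_trans; [apply Rmin_r| apply Rmin_r].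
  intros l Hl x y Hxy.
  assert (Hl1 : Rabs l < d1) by (eapply Rlt_le_trans; [apply Hl|]; unfold d; eapply Rle_trans; [apply Rmin_l|]; eapply Rle_trans; [apply Rmin_l|]; apply Rmin_l).
  assert (Hl2 : Rabs l < d2) by (eapply Rlt_le_trans; [apply Hl|]; unfold d; eapply Rle_trans; [apply Rmin_l|]; eapply Rle_trans; [apply Rmin_l|]; apply Rmin_r).
  assert (Hl3 : Rabs l < d3) by (eapply Rlt_le_trans; [apply Hl|]; unfold d; eapply Rle_trans; [apply Rmin_l|]; eapply Rle_trans; [apply Rmin_r|]; apply Rmin_l).
  assert (Hl4 : Rabs l < d4) by (eapply Rlt_le_trans; [apply Hl|]; unfold d; eapply Rle_trans; [apply Rmin_l|]; eapply Rle_trans; [apply Rmin_r|]; apply Rmin_r).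
  assert (Hl5 : Rabs (l - 0) < d5) by (rewrite Rminus_0_r; eapply Rlt_le_trans; [apply Hl|]; unfold d; eapply Rle_trans; [apply Rmin_r|]; apply Rmin_l).
  assert (Hl6 : Rabs l < 1) by (eapply Rlt_le_trans; [apply Hl|]; unfold d; eapply Rle_trans; [apply Rmin_r|]; apply Rmin_r).
  specialize (B1 l Hl1). specialize (B2 l Hl2). specialize (B3 l Hl3). specialize (B4 l Hl4). specialize (B5 l Hl5).
  simpl in B1, B2, B3, B4, B5.
  rewrite H1, H2, H3 in B1, B2, B3. rewrite H1, H3 in B4. rewrite H1, H2 in B5.
  set (b1 := a1 (mu1 l) (mu2 l) (mu3 l) * mu1 l) in *.
  set (b2 := a2 (mu1 l) (mu2 l) (mu3 l) * mu2 l) in *.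
  set (b3 := a3 (mu1 l) (mu2 l) (mu3 l) * mu3 l) in *.
  set (c2 := mu2 l - mu1 l) in *. set (c3 := mu3 l - mu1 l) in *.
  replace (a1 (-1) 0 1 * -1) with (-1/2) in B1 by (unfold a1; field).
  replace (a2 (-1) 0 1 * 0) with 0 in B2 by (unfold a2; field).
  replace (a3 (-1) 0 1 * 1) with (1/2) in B3 by (unfold a3; field).
  replace (0 - -1) with 1 in B5 by ring. replace (1 - -1) with 2 in B4 by ring.
  set (t := x - y).
  assert (Ht : t <= 0) by (unfold t; lra).
  assert (Hc2 : Rabs (c2 - 1) <= e) by lra.
  assert (Hc3 : Rabs (c3 - 2) <= e) by (rewrite Rmult_0_r, Rminus_0_r in B4; pose proof (Rabs_pos l); nra).
  assert (Hc2' : 1/2 <= c2) by (apply Rabs_le_between in Hc2; lra).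
  assert (Hc3' : 1/2 <= c3) by (apply Rabs_le_between in Hc3; lra).
  assert (HK : Kl mu1 mu2 mu3 l x y - K0 x y - l * Kd x y =
     (b1 - -1/2 - l*(1/2)) + ((b2 - 0 - l*(-1)) * exp (c2*t) - l * (exp (c2*t) - exp (1*t)))
     + ((b3 - 1/2 - l*(1/2)) * exp (c3*t) + (1/2 + l/2) * (exp (c3*t) - exp (2*t)))).
  { unfold Kl, kernel, K0, Kd. fold b1 b2 b3 c2 c3. fold t.
    replace ((mu1 l - mu1 l) * t) with 0 by ring. rewrite exp_0.
    replace (2*t) with (t + t) by ring. rewrite exp_plus. rewrite Rmult_1_l. field. }
  rewrite HK.
  pose proof (exp_le1 c2 t ltac:(lra) Ht). pose proof (exp_le1 c3 t ltac:(lra) Ht).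
  pose proof (exp_diff c2 1 t Hc2' ltac:(lra) Ht).
  pose proof (exp_diff c3 2 t Hc3' ltac:(lra) Ht).
  set (A1 := b1 - -1/2 - l*(1/2)) in *. set (A2 := b2 - 0 - l*(-1)) in *. set (A3 := b3 - 1/2 - l*(1/2)) in *.
  set (D2 := exp (c2*t) - exp (1*t)) in *. set (D3 := exp (c3*t) - exp (2*t)) in *.
  set (X2 := exp (c2*t)) in *. set (X3 := exp (c3*t)) in *.
  assert (Rabs (A2 * X2) <= e * Rabs l).
  { rewrite Rabs_mult. rewrite (Rabs_pos_eq X2) by lra. pose proof (Rabs_pos A2). nra. }
  assert (Rabs (l * D2) <= 2 * e * Rabs l).
  { rewrite Rabs_mult. pose proof (Rabs_pos l). assert (Rabs D2 <= 2*e) by lra.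
    replace (2*e*Rabs l) with (Rabs l * (2*e)) by ring.
    apply Rmult_le_compat_l; lra. }
  assert (Rabs (A3 * X3) <= e * Rabs l).
  { rewrite Rabs_mult. rewrite (Rabs_pos_eq X3) by lra. pose proof (Rabs_pos A3). nra. }
  assert (Rabs ((1/2 + l/2) * D3) <= 2 * e * Rabs l).
  { rewrite Rabs_mult. pose proof (Rabs_pos l). pose proof (Rabs_pos D3).
    assert (Rabs (1/2 + l/2) <= 1) by (apply Rabs_le; apply Rabs_lt_between in Hl6; lra).
    assert (Rabs (c3 - 2) <= e * Rabs l) by (rewrite Rmult_0_r, Rminus_0_r in B4; lra).
    pose proof (Rabs_pos (1/2 + l/2)). nra. }
  pose proof (Rabs_triang (A1 + (A2 * X2 - l * D2)) (A3 * X3 + (1/2 + l/2) * D3)) as T1.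
  pose proof (Rabs_triang A1 (A2 * X2 - l * D2)) as T2.
  assert (T3: Rabs (A2*X2 - l*D2) <= Rabs (A2*X2) + Rabs (l*D2)).
  { unfold Rminus; rewrite <- (Rabs_Ropp (l*D2)); apply Rabs_triang. }
  pose proof (Rabs_triang (A3 * X3) ((1/2 + l/2) * D3)) as T4.
  pose proof (Rabs_pos l).
  assert (7 * e * Rabs l <= eps * Rabs l) by nra.
  lra.
Qed.

Lemma isR_minus (f g : R -> R) a b If Ig : is_RInt f a b If -> is_RInt g a b Ig ->
  is_RInt (fun y => f y - g y) a b (If - Ig).
Proof. intros H1 H2. exact (is_RInt_minus f g a b If Ig H1 H2). Qed.

Lemma isR_plus (f g : R -> R) a b If Ig : is_RInt f a b If -> is_RInt g a b Ig ->
  is_RInt (fun y => f y + g y) a b (If + Ig).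
Proof. intros H1 H2. exact (is_RInt_plus f g a b If Ig H1 H2). Qed.

Lemma isR_scal (f : R -> R) a b c If : is_RInt f a b If ->
  is_RInt (fun y => c * f y) a b (c * If).
Proof. intros H1. exact (is_RInt_scal f a b c If H1). Qed.

Lemma gen_extract (f : R -> R) x L : is_RInt_gen f (at_point x) (Rbar_locally p_infty) L ->
  forall eta, 0 < eta -> exists B, forall b, B < b -> exists I, is_RInt f x b I /\ Rabs (I - L) < eta.
Proof.
  intros H eta He.
  specialize (H (fun y => Rabs (y - L) < eta)).
  assert (Hl : locally L (fun y => Rabs (y - L) < eta)).
  { exists (mkposreal eta He). intros y Hy. exact Hy. }
  specialize (H Hl). destruct H as [Q R' HQ HR HP].
  destruct HR as [M HM]. exists M. intros b Hb.
  destruct (HP x b HQ (HM b Hb)) as [I [HI1 HI2]]. exists I. split; auto.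
Qed.

Lemma Vf_int p x b : 1 < p -> is_RInt (Vf p) x b (Uf p x - Uf p b).
Proof.
  intros Hp. set (G := fun y => - Uf p y).
  replace (Uf p x - Uf p b) with (minus (G b) (G x)) by (unfold G, minus, plus, opp; simpl; ring).
  apply (is_RInt_derive G).
  - intros y _. unfold G, Uf, Cv, Vf, sE. assert (0 < exp (-(p-1)*y)) by apply exp_pos.
    auto_derive. lra. field. split; lra.
  - intros y _. apply (ex_derive_continuous (Vf p)).
    unfold Vf, sE. assert (0 < exp (-(p-1)*y)) by apply exp_pos.
    auto_derive. repeat split; try apply Rgt_not_eq; nra.
Qed.

Lemma Kl_cont mu1 mu2 mu3 l x y : continuous (fun y => Kl mu1 mu2 mu3 l x y) y.
Proof.
  apply (ex_derive_continuous (fun y => Kl mu1 mu2 mu3 l x y)).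
  unfold Kl, kernel. auto_derive. auto.
Qed.

Lemma m0f_cont p y : 1 < p -> continuous (m0f p) y.
Proof.
  intros Hp. apply (ex_derive_continuous (m0f p)). unfold m0f, Wf, sE.
  assert (0 < exp (-(p-1)*y)) by apply exp_pos.
  auto_derive. repeat split; try apply Rgt_not_eq; nra.
Qed.

Lemma mdf_cont p y : 1 < p -> continuous (mdf p) y.
Proof.
  intros Hp. apply (ex_derive_continuous (mdf p)). unfold mdf, Wf, sE.
  assert (0 < exp (-(p-1)*y)) by apply exp_pos.
  auto_derive. repeat split; try apply Rgt_not_eq; nra.
Qed.

Lemma Vf_cont p y : 1 < p -> continuous (Vf p) y.
Proof.
  intros Hp. apply (ex_derive_continuous (Vf p)). unfold Vf, sE.
  assert (0 < exp (-(p-1)*y)) by apply exp_pos.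
  auto_derive. repeat split; try apply Rgt_not_eq; nra.
Qed.

Lemma Wf_le1 p y : 1 < p -> 0 < Wf p y <= 1.
Proof.
  intros Hp. split. apply exp_pos. unfold Wf.
  assert (0 < sE p y) by apply sE_pos.
  assert (0 <= ln (1 + sE p y)).
  { rewrite <- ln_1. destruct (Req_dec 1 (1 + sE p y)). lra. left; apply ln_increasing; lra. }
  assert (0 < 2/(p-1)) by (apply Rdiv_lt_0_compat; lra).
  assert (Hn : -(2/(p-1)) * ln (1 + sE p y) <= 0) by nra.
  pose proof (exp_le_mono _ _ Hn) as He. rewrite exp_0 in He. exact He.
Qed.

Lemma m0f_bound p y : 1 < p -> Rabs (m0f p y) <= 1.
Proof.
  intros Hp. unfold m0f. rewrite Rabs_mult. pose proof (Wf_le1 p y Hp).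
  rewrite (Rabs_pos_eq (Wf p y)) by lra.
  assert (0 < sE p y) by apply sE_pos.
  assert (Rabs ((1 - sE p y) / (1 + sE p y)) <= 1).
  { unfold Rdiv. rewrite Rabs_mult, Rabs_inv, (Rabs_pos_eq (1 + sE p y)) by lra.
    apply (Rmult_le_reg_r (1 + sE p y)). lra. rewrite Rmult_assoc, Rinv_l by lra.
    rewrite Rmult_1_r, Rmult_1_l. apply Rabs_le. split; lra. }
  pose proof (Rabs_pos ((1 - sE p y) / (1 + sE p y))). nra.
Qed.

Lemma mdf_bound p y : 1 < p -> Rabs (mdf p y) <= 2/(p-1).
Proof.
  intros Hp. unfold mdf. pose proof (Wf_le1 p y Hp).
  assert (0 < sE p y) by apply sE_pos.
  assert (0 < 2/(p-1)) by (apply Rdiv_lt_0_compat; lra).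
  assert (0 <= sE p y / (1 + sE p y) <= 1).
  { assert (E : sE p y / (1 + sE p y) = 1 - 1/(1 + sE p y)) by (field; lra).
    assert (0 < 1/(1 + sE p y)) by (apply Rdiv_lt_0_compat; lra).
    split. apply Rdiv_le_0_compat; lra. lra. }
  replace (2 / (p - 1) * sE p y / (1 + sE p y) * Wf p y) with (2/(p-1) * (sE p y / (1 + sE p y)) * Wf p y) by (field; lra).
  rewrite Rabs_pos_eq.
  2:{ apply Rmult_le_pos; [apply Rmult_le_pos|]; lra. }
  assert (2/(p-1) * (sE p y / (1 + sE p y)) <= 2/(p-1)) by nra. nra.
Qed.

Lemma K0_bound x y : x <= y -> Rabs (K0 x y) <= 1/2.
Proof.
  intros H. unfold K0. pose proof (exp_le1 1 (x-y) ltac:(lra) ltac:(lra)). rewrite Rmult_1_l in H0.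
  apply Rabs_le. split; nra.
Qed.

Lemma Kd_bound x y : x <= y -> Rabs (Kd x y) <= 1/2.
Proof.
  intros H. unfold Kd. pose proof (exp_le1 1 (x-y) ltac:(lra) ltac:(lra)). rewrite Rmult_1_l in H0.
  apply Rabs_le. split; nra.
Qed.

Lemma cont_prod3 (f g h : R -> R) y : continuous f y -> continuous g y -> continuous h y ->
  continuous (fun y => f y * g y * h y) y.
Proof.
  intros. apply (continuous_mult (fun y => f y * g y) h); auto.
  apply (continuous_mult f g); auto.
Qed.

Lemma rep p delta mu1 mu2 mu3 (m : R -> R -> R) eps d l :
  1 < p -> (forall l, Rabs l < delta -> is_m1 p mu1 mu2 mu3 l (fun x => m x l)) ->
  0 < eps -> d <= 1 ->
  (forall l, Rabs l < d -> forall x y, x <= y ->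
    Rabs (Kl mu1 mu2 mu3 l x y - K0 x y - l * Kd x y) <= eps * Rabs l) ->
  Rabs l < d -> Rabs l < delta ->
  forall x eta, 0 < eta -> exists b, x < b /\
    ex_RInt (fun y => Kl mu1 mu2 mu3 l x y * Vf p y * (m y l - m0f p y - l * mdf p y)) x b /\
    Rabs ((m x l - m0f p x - l * mdf p x) -
          RInt (fun y => Kl mu1 mu2 mu3 l x y * Vf p y * (m y l - m0f p y - l * mdf p y)) x b)
    <= Rabs l * (eps + (1/2 + eps) * Rabs l * (2/(p-1))) * Cv p + eta.
Proof.
  intros Hp Hm He Hd1 Hest Hld Hldel x eta Heta.
  destruct (Hm l Hldel) as [_ Hint]. specialize (Hint x).
  set (e3 := eta/3).
  assert (He3 : 0 < e3) by (unfold e3; lra).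
  destruct (gen_extract _ _ _ Hint e3 He3) as [B HB].
  destruct (lim_to_eps _ _ (G0_lim p x Hp) e3 He3) as [B0 HB0].
  destruct (lim_to_eps _ _ (Gd_lim p x Hp) e3 He3) as [B1 HB1].
  set (b := Rmax (Rmax x B) (Rmax B0 B1) + 1).
  assert (Hxb : x < b /\ B < b /\ B0 < b /\ B1 < b).
  { unfold b. pose proof (Rmax_l x B). pose proof (Rmax_r x B). pose proof (Rmax_l B0 B1). pose proof (Rmax_r B0 B1).
    pose proof (Rmax_l (Rmax x B) (Rmax B0 B1)). pose proof (Rmax_r (Rmax x B) (Rmax B0 B1)). lra. }
  destruct Hxb as [Hxb [HBb [HB0b HB1b]]].
  destruct (HB b HBb) as [I [HI HIe]].
  specialize (HB0 b HB0b). specialize (HB1 b HB1b).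
  exists b. 
  assert (HI' : is_RInt (fun y => Kl mu1 mu2 mu3 l x y * Vf p y * m y l) x b I).
  { apply (is_RInt_ext (fun y => kernel (mu1 l) (mu2 l) (mu3 l) (mu1 l) x y * pot p y * m y l)); auto.
    intros y _. unfold Kl. rewrite pot_eq by lra. reflexivity. }
  set (fm0 := fun y => Kl mu1 mu2 mu3 l x y * Vf p y * m0f p y).
  set (fmd := fun y => Kl mu1 mu2 mu3 l x y * Vf p y * mdf p y).
  assert (HJ1 : is_RInt fm0 x b (RInt fm0 x b)).
  { apply (RInt_correct fm0). apply (ex_RInt_continuous fm0). intros z _. unfold fm0.
    apply (cont_prod3 (fun y => Kl mu1 mu2 mu3 l x y) (Vf p) (m0f p)).
    apply Kl_cont. apply Vf_cont; auto. apply m0f_cont; auto. }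
  assert (HJ2 : is_RInt fmd x b (RInt fmd x b)).
  { apply (RInt_correct fmd). apply (ex_RInt_continuous fmd). intros z _. unfold fmd.
    apply (cont_prod3 (fun y => Kl mu1 mu2 mu3 l x y) (Vf p) (mdf p)).
    apply Kl_cont. apply Vf_cont; auto. apply mdf_cont; auto. }
  set (J1 := RInt fm0 x b) in *. set (J2 := RInt fmd x b) in *.
  assert (Hr : is_RInt (fun y => Kl mu1 mu2 mu3 l x y * Vf p y * (m y l - m0f p y - l * mdf p y)) x b
                 (I - J1 - l * J2)).
  { apply (is_RInt_ext (fun y => (Kl mu1 mu2 mu3 l x y * Vf p y * m y l - fm0 y) - l * fmd y)).
    intros y _. unfold fm0, fmd. cbv beta. change (@eq R (Kl mu1 mu2 mu3 l x y * Vf p y * m y l - Kl mu1 mu2 mu3 l x y * Vf p y * m0f p y - l * (Kl mu1 mu2 mu3 l x y * Vf p y * mdf p y)) (Kl mu1 mu2 mu3 l x y * Vf p y * (m y l - m0f p y - l * mdf p y))). ring.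
    apply isR_minus. apply isR_minus; auto. apply isR_scal; auto. }
  split; auto. split. eexists; eauto.
  rewrite (is_RInt_unique _ _ _ _ Hr).
  set (src := fun y => fm0 y - F0 p x y - l * Fd p x y + l * fmd y).
  assert (Hsrc : is_RInt src x b (J1 - (G0 p x b + m0f p x) - l * (Gd p x b + mdf p x) + l * J2)).
  { apply isR_plus. apply isR_minus. apply isR_minus; auto. apply F0_int; auto.
    apply isR_scal. apply Fd_int; auto. apply isR_scal; auto. }
  set (bnd := Rabs l * (eps + (1/2 + eps) * Rabs l * (2/(p-1)))).
  assert (Hbnd0 : 0 <= bnd).
  { unfold bnd. pose proof (Rabs_pos l). assert (0 < 2/(p-1)) by (apply Rdiv_lt_0_compat; lra).
    apply Rmult_le_pos; auto. apply Rplus_le_le_0_compat. lra. repeat apply Rmult_le_pos; lra. }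
  assert (Hsb : Rabs (J1 - (G0 p x b + m0f p x) - l * (Gd p x b + mdf p x) + l * J2) <= bnd * (Uf p x - Uf p b)).
  { apply (norm_RInt_le src (fun y => bnd * Vf p y) x b). lra.
    - intros y Hy. change norm with Rabs. simpl.
      assert (Hxy : x <= y) by lra.
      specialize (Hest l Hld x y Hxy).
      pose proof (Kd_bound x y Hxy). pose proof (Vf_nonneg p y Hp).
      pose proof (m0f_bound p y Hp). pose proof (mdf_bound p y Hp).
      assert (Hs : src y = (Kl mu1 mu2 mu3 l x y - K0 x y - l * Kd x y) * Vf p y * m0f p y
                           + l * (Kl mu1 mu2 mu3 l x y - K0 x y) * Vf p y * mdf p y).
      { unfold src, fm0, fmd, F0, Fd. ring. }
      rewrite Hs.
      set (A := Kl mu1 mu2 mu3 l x y - K0 x y - l * Kd x y) in *.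
      assert (HA2 : Rabs (Kl mu1 mu2 mu3 l x y - K0 x y) <= (1/2 + eps) * Rabs l).
      { replace (Kl mu1 mu2 mu3 l x y - K0 x y) with (A + l * Kd x y) by (unfold A; ring).
        pose proof (Rabs_triang A (l * Kd x y)). rewrite Rabs_mult in H3.
        pose proof (Rabs_pos l). nra. }
      set (A2 := Kl mu1 mu2 mu3 l x y - K0 x y) in *.
      pose proof (Rabs_triang (A * Vf p y * m0f p y) (l * A2 * Vf p y * mdf p y)).
      rewrite !Rabs_mult in H3. rewrite (Rabs_pos_eq (Vf p y)) in H3 by auto.
      pose proof (Rabs_pos l). pose proof (Rabs_pos A). pose proof (Rabs_pos A2).
      pose proof (Rabs_pos (m0f p y)). pose proof (Rabs_pos (mdf p y)).
      assert (Rabs A * Vf p y * Rabs (m0f p y) <= eps * Rabs l * Vf p y).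
      { apply Rle_trans with (Rabs A * Vf p y * 1). apply Rmult_le_compat_l; nra.
        rewrite Rmult_1_r. apply Rmult_le_compat_r; auto. }
      assert (Rabs l * Rabs A2 * Vf p y * Rabs (mdf p y) <= Rabs l * ((1/2+eps) * Rabs l) * Vf p y * (2/(p-1))).
      { assert (X : Rabs l * Rabs A2 * Vf p y <= Rabs l * ((1/2+eps) * Rabs l) * Vf p y).
        { apply Rmult_le_compat_r; auto. apply Rmult_le_compat_l; auto. }
        apply Rmult_le_compat; auto. apply Rmult_le_pos; auto. apply Rmult_le_pos; auto. }
      unfold bnd. nra.
    - exact Hsrc.
    - replace (bnd * (Uf p x - Uf p b)) with (bnd * (Uf p x - Uf p b)) by ring.
      apply (isR_scal (Vf p) x b bnd). apply Vf_int; auto. }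
  assert (Hsb2 : bnd * (Uf p x - Uf p b) <= bnd * Cv p).
  { apply Rmult_le_compat_l; auto. pose proof (Uf_bounds p x Hp). pose proof (Uf_bounds p b Hp). lra. }
  set (S := J1 - (G0 p x b + m0f p x) - l * (Gd p x b + mdf p x) + l * J2) in *.
  replace (m x l - m0f p x - l * mdf p x - (I - J1 - l * J2)) with
     (- (I - (m x l - 1)) + (G0 p x b - -1) + l * (Gd p x b - 0) + S) by (unfold S; ring).
  pose proof (Rabs_triang (- (I - (m x l - 1)) + (G0 p x b - -1) + l * (Gd p x b - 0)) S).
  pose proof (Rabs_triang (- (I - (m x l - 1)) + (G0 p x b - -1)) (l * (Gd p x b - 0))).
  pose proof (Rabs_triang (- (I - (m x l - 1))) (G0 p x b - -1)).
  rewrite Rabs_Ropp in H1. rewrite Rabs_mult in H0.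
  assert (Rabs l * Rabs (Gd p x b - 0) <= 1 * e3).
  { apply Rmult_le_compat; try apply Rabs_pos; lra. }
  fold bnd. unfold e3 in *. lra.
Qed.

Lemma abs_sub_le a b : Rabs (a - b) <= Rabs a + Rabs b.
Proof. unfold Rminus. rewrite <- (Rabs_Ropp b). apply Rabs_triang. Qed.

Lemma r_bound p delta mu1 mu2 mu3 (m : R -> R -> R) eps d l :
  1 < p -> (forall l, Rabs l < delta -> is_m1 p mu1 mu2 mu3 l (fun x => m x l)) ->
  0 < eps -> eps <= 1 -> d <= 1 ->
  (forall l, Rabs l < d -> forall x y, x <= y ->
    Rabs (Kl mu1 mu2 mu3 l x y - K0 x y - l * Kd x y) <= eps * Rabs l) ->
  Rabs l < d -> Rabs l < delta ->
  forall x, Rabs (m x l - m0f p x - l * mdf p x) <=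
     2 * (Rabs l * (eps + (1/2 + eps) * Rabs l * (2/(p-1))) * Cv p) * exp (2*2 * Cv p).
Proof.
  intros Hp Hm He He1 Hd1 Hest Hld Hldel.
  destruct (Hm l Hldel) as [[M HM] _].
  assert (Hq : 0 < 2/(p-1)) by (apply Rdiv_lt_0_compat; lra).
  assert (HCv : 0 < Cv p) by (unfold Cv; apply Rdiv_lt_0_compat; nra).
  apply (volterra p (Kl mu1 mu2 mu3 l) (fun y => m y l - m0f p y - l * mdf p y) _ 2
          (M + 1 + Rabs l * (2/(p-1)))); auto; try lra.
  - pose proof (Rabs_pos l). apply Rmult_le_pos; [|lra]. apply Rmult_le_pos; auto.
    apply Rplus_le_le_0_compat. lra. repeat apply Rmult_le_pos; lra.
  - intros y. pose proof (HM y). pose proof (m0f_bound p y Hp). pose proof (mdf_bound p y Hp).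
    pose proof (abs_sub_le (m y l - m0f p y) (l * mdf p y)). rewrite Rabs_mult in H2.
    pose proof (abs_sub_le (m y l) (m0f p y)).
    pose proof (Rabs_pos l).
    assert (Rabs l * Rabs (mdf p y) <= Rabs l * (2/(p-1))) by (apply Rmult_le_compat_l; auto).
    lra.
  - intros x y Hxy. specialize (Hest l Hld x y Hxy).
    pose proof (K0_bound x y Hxy). pose proof (Kd_bound x y Hxy).
    set (A := Kl mu1 mu2 mu3 l x y - K0 x y - l * Kd x y) in *.
    replace (Kl mu1 mu2 mu3 l x y) with (A + K0 x y + l * Kd x y) by (unfold A; ring).
    pose proof (Rabs_triang (A + K0 x y) (l * Kd x y)). rewrite Rabs_mult in H1.
    pose proof (Rabs_triang A (K0 x y)). pose proof (Rabs_pos l). pose proof (Rabs_pos (Kd x y)).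
    assert (Rabs l < 1) by lra.
    assert (Rabs l * Rabs (Kd x y) <= 1 * (1/2)) by (apply Rmult_le_compat; lra).
    assert (eps * Rabs l <= 1) by nra. lra.
  - intros x eta Heta. apply (rep p delta mu1 mu2 mu3 m eps d l); auto.
Qed.

Lemma m1_main p delta mu1 mu2 mu3 (m : R -> R -> R) :
  1 < p -> 0 < delta -> root_branches delta mu1 mu2 mu3 ->
  (forall l, Rabs l < delta -> is_m1 p mu1 mu2 mu3 l (fun x => m x l)) ->
  (forall x, m x 0 = m0f p x) /\ (forall x, is_derive (fun l => m x l) 0 (mdf p x)).
Proof.
  intros Hp Hd Hrb Hm.
  assert (Hq : 0 < 2/(p-1)) by (apply Rdiv_lt_0_compat; lra).
  assert (HCv : 0 < Cv p) by (unfold Cv; apply Rdiv_lt_0_compat; nra).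
  set (C := 2 * Cv p * exp (2*2*Cv p)).
  assert (HC : 0 < C) by (unfold C; pose proof (exp_pos (2*2*Cv p)); nra).
  assert (Hgen : forall eps, 0 < eps -> eps <= 1 -> exists d, 0 < d /\ forall l, Rabs l < d -> forall x,
     Rabs (m x l - m0f p x - l * mdf p x) <= C * (Rabs l * (eps + (1/2 + eps) * Rabs l * (2/(p-1))))).
  { intros eps He He1.
    destruct (kernel_est delta mu1 mu2 mu3 Hd Hrb eps He) as [d [Hd0 [Hd1 Hest]]].
    exists (Rmin d delta). split. apply Rmin_pos; auto.
    intros l Hl x.
    assert (Hl1 : Rabs l < d) by (eapply Rlt_le_trans; [apply Hl|apply Rmin_l]).
    assert (Hl2 : Rabs l < delta) by (eapply Rlt_le_trans; [apply Hl|apply Rmin_r]).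
    pose proof (r_bound p delta mu1 mu2 mu3 m eps d l Hp Hm He He1 Hd1 Hest Hl1 Hl2 x).
    unfold C. lra. }
  assert (H0 : forall x, m x 0 = m0f p x).
  { intros x. destruct (Hgen 1 ltac:(lra) ltac:(lra)) as [d [Hd0 Hb]].
    assert (Rabs 0 < d) by (rewrite Rabs_R0; auto).
    specialize (Hb 0 H x). rewrite Rabs_R0 in Hb.
    replace (C * (0 * (1 + (1 / 2 + 1) * 0 * (2 / (p - 1))))) with 0 in Hb by ring.
    pose proof (Rabs_pos (m x 0 - m0f p x - 0 * mdf p x)).
    assert (Rabs (m x 0 - m0f p x - 0 * mdf p x) = 0) by lra.
    apply Rabs_eq_0 in H1. lra. }
  split; auto.
  intros x. apply is_derive_Reals. intros e0 He0.
  set (eps := Rmin 1 (e0 / (4*C))).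
  assert (Heps : 0 < eps) by (apply Rmin_pos; [lra| apply Rdiv_lt_0_compat; lra]).
  assert (Heps1 : eps <= 1) by apply Rmin_l.
  assert (Heps2 : eps <= e0/(4*C)) by apply Rmin_r.
  destruct (Hgen eps Heps Heps1) as [d [Hd0 Hb]].
  set (K := (1/2 + eps) * (2/(p-1))).
  assert (HK : 0 < K) by (unfold K; apply Rmult_lt_0_compat; lra).
  set (d2 := Rmin d (e0 / (4*C*K))).
  assert (Hd2 : 0 < d2) by (apply Rmin_pos; auto; apply Rdiv_lt_0_compat; [lra| apply Rmult_lt_0_compat; lra]).
  exists (mkposreal d2 Hd2). intros h Hh0 Hh. simpl in Hh.
  assert (Hh1 : Rabs h < d) by (eapply Rlt_le_trans; [apply Hh|apply Rmin_l]).
  assert (Hh2 : Rabs h <= e0 / (4*C*K)) by (left; eapply Rlt_le_trans; [apply Hh|apply Rmin_r]).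
  specialize (Hb h Hh1 x).
  rewrite Rplus_0_l, H0.
  replace ((m x h - m0f p x) / h - mdf p x) with ((m x h - m0f p x - h * mdf p x) / h) by (field; auto).
  unfold Rdiv. rewrite Rabs_mult, Rabs_inv.
  assert (Hah : 0 < Rabs h) by (apply Rabs_pos_lt; auto).
  apply (Rmult_lt_reg_r (Rabs h)); auto. rewrite Rmult_assoc, Rinv_l by lra. rewrite Rmult_1_r.
  replace (C * (Rabs h * (eps + (1 / 2 + eps) * Rabs h * (2 / (p - 1))))) with
     (Rabs h * (C * eps + C * K * Rabs h)) in Hb by (unfold K; ring).
  assert (C * eps <= e0/4).
  { apply Rmult_le_compat_l with (r := C) in Heps2; [|lra].
    replace (C * (e0 / (4*C))) with (e0/4) in Heps2 by (field; lra). lra. }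
  assert (C * K * Rabs h <= e0/4).
  { apply Rmult_le_compat_l with (r := C * K) in Hh2; [|nra].
    replace (C * K * (e0 / (4*C*K))) with (e0/4) in Hh2 by (field; lra). lra. }
  assert (Rabs h * (C * eps + C * K * Rabs h) <= Rabs h * (e0/2)) by (apply Rmult_le_compat_l; lra).
  nra.
Qed.

Lemma phi_even p y : phi p (- y) = phi p y.
Proof.
  unfold phi, sech.
  replace ((p - 1) / 2 * - y) with (- ((p - 1) / 2 * y)) by ring.
  rewrite Ropp_involutive. rewrite (Rplus_comm (exp (- ((p - 1) / 2 * y)))). reflexivity.
Qed.

Lemma pot_even p y : pot p (- y) = pot p y.
Proof. unfold pot. rewrite phi_even. reflexivity. Qed.

Lemma kernel_refl a b c x z :
  kernel (-c) (-b) (-a) (-c) x z = - kernel a b c c (-x) (-z).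
Proof.
  unfold kernel, a1, a2, a3.
  replace ((-c - -c) * (x - z)) with ((c - c) * (-x - -z)) by ring.
  replace ((-b - -c) * (x - z)) with ((b - c) * (-x - -z)) by ring.
  replace ((-a - -c) * (x - z)) with ((a - c) * (-x - -z)) by ring.
  replace ((- c - - b) * (- c - - a)) with ((a - c) * (b - c)) by ring.
  replace ((- b - - c) * (- b - - a)) with ((b - a) * (b - c)) by ring.
  replace ((- c - - a) * (- b - - a)) with ((a - b) * (a - c)) by ring.
  ring.
Qed.

Lemma refl_m1 p mu1 mu2 mu3 (m3 : R -> R -> R) l :
  is_m3 p mu1 mu2 mu3 (-l) (fun x => m3 x (-l)) ->
  is_m1 p (fun l => - mu3 (-l)) (fun l => - mu2 (-l)) (fun l => - mu1 (-l)) l (fun x => m3 (-x) (-l)).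
Proof.
  intros [[M HM] Hint]. split.
  { exists M. intros x. apply HM. }
  intros x. specialize (Hint (-x)).
  intros P HP.
  set (P' := fun v : R => P (- v)).
  assert (HP' : locally (1 - m3 (-x) (-l)) P').
  { destruct HP as [e He]. exists e. intros v Hv. unfold P'. apply He.
    unfold ball in *; simpl in *; unfold AbsRing_ball in *; simpl in *.
    unfold minus, plus, opp in *; simpl in *. unfold abs in *; simpl in *.
    replace (- v + - (m3 (- x) (- l) - 1)) with (- (v + - (1 - m3 (- x) (- l)))) by ring.
    rewrite Rabs_Ropp. exact Hv. }
  destruct (Hint P' HP') as [Q R' HQ HR HQR].
  destruct HQ as [M0 HM'].
  exists (fun a => a = x) (fun b => Q (- b)).
  - reflexivity.
  - exists (- M0). intros b Hb. apply HM'. lra.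
  - intros a b Ha Hb. simpl in Ha. subst a.
    destruct (HQR (-b) (-x) Hb HR) as [y [Hy HPy]].
    exists (- y). split.
    + simpl in Hy |- *.
      apply is_RInt_swap in Hy.
      apply is_RInt_comp_opp in Hy.
      apply (is_RInt_ext _ _ _ _ _ (fun z _ => eq_refl)) in Hy.
      eapply is_RInt_ext; [|exact Hy].
      intros z _. simpl. rewrite kernel_refl. rewrite pot_even. unfold opp; simpl.
      ring.
    + exact HPy.
Qed.

Lemma refl_rb delta mu1 mu2 mu3 : root_branches delta mu1 mu2 mu3 ->
  root_branches delta (fun l => - mu3 (-l)) (fun l => - mu2 (-l)) (fun l => - mu1 (-l)).
Proof.
  intros [H1 [H2 [H3 H]]]. unfold root_branches. cbv beta. rewrite Ropp_0.
  split; [rewrite H3; ring|]. split; [rewrite H2; ring|]. split; [rewrite H1; ring|].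
  intros l Hl. assert (Hl' : Rabs (-l) < delta) by (rewrite Rabs_Ropp; auto).
  destruct (H (-l) Hl') as [r1 [r2 [r3 [c1 [c2 c3]]]]].
  repeat split.
  - replace ((- mu3 (- l)) ^ 3 - - mu3 (- l) + l) with (- (mu3 (-l) ^ 3 - mu3 (-l) + - l)) by ring. rewrite r3. ring.
  - replace ((- mu2 (- l)) ^ 3 - - mu2 (- l) + l) with (- (mu2 (-l) ^ 3 - mu2 (-l) + - l)) by ring. rewrite r2. ring.
  - replace ((- mu1 (- l)) ^ 3 - - mu1 (- l) + l) with (- (mu1 (-l) ^ 3 - mu1 (-l) + - l)) by ring. rewrite r1. ring.
  - apply (continuous_opp (fun l => mu3 (-l))). apply (continuous_comp Ropp mu3).
    apply (ex_derive_continuous (fun l => - l)). auto_derive. auto. exact c3.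
  - apply (continuous_opp (fun l => mu2 (-l))). apply (continuous_comp Ropp mu2).
    apply (ex_derive_continuous (fun l => - l)). auto_derive. auto. exact c2.
  - apply (continuous_opp (fun l => mu1 (-l))). apply (continuous_comp Ropp mu1).
    apply (ex_derive_continuous (fun l => - l)). auto_derive. auto. exact c1.
Qed.

Lemma beta_pos p : 1 < p -> 0 < beta p.
Proof. intros. rewrite beta_eq by auto. apply exp_pos. Qed.

Lemma f1_result p (mu1 : R -> R) (m : R -> R -> R) x : 1 < p -> mu1 0 = -1 -> is_derive mu1 0 (-1/2) ->
  (forall x, m x 0 = m0f p x) -> (forall x, is_derive (fun l => m x l) 0 (mdf p x)) ->
  exp (mu1 0 * x) * m x 0 = - / beta p * Derive (phi p) x /\
  is_derive (fun l => exp (mu1 l * x) * m x l) 0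
      (/ beta p * (1 / (p - 1) * Derive (phi p) x + Lambda_phi p x)).
Proof.
  intros Hp H0 Hd Hm0 Hmd.
  pose proof (beta_pos p Hp) as Hb.
  unfold Lambda_phi. rewrite Derive_phi, phi_eq by auto.
  assert (0 < sE p x) by apply sE_pos.
  split.
  { rewrite H0, Hm0. unfold m0f. replace (-1 * x) with (-x) by ring. field. split; lra. }
  assert (He : is_derive (fun l => exp (mu1 l * x)) 0 (-1/2 * x * exp (mu1 0 * x))).
  { apply (is_derive_comp exp (fun l => mu1 l * x) 0 (exp (mu1 0 * x)) (-1/2 * x)).
    apply (is_derive_exp (mu1 0 * x)).
    apply (is_derive_scal_l mu1 0 (-1/2) x). auto. }
  pose proof (is_derive_mult (fun l => exp (mu1 l * x)) (fun l => m x l) 0 _ _ He (Hmd x) ltac:(intros; apply Rmult_comm)) as Hp2.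
  simpl in Hp2. unfold mult, plus in Hp2; simpl in Hp2.
  match goal with |- is_derive _ _ ?v =>
    replace v with (-1 / 2 * x * exp (mu1 0 * x) * m x 0 + exp (mu1 0 * x) * mdf p x) end.
  exact Hp2.
  rewrite H0, Hm0. unfold m0f, mdf. replace (-1 * x) with (-x) by ring. field. split; lra.
Qed.

Lemma is_derive_phi p y : 1 < p -> is_derive (phi p) y (Derive (phi p) y).
Proof.
  intros Hp. rewrite Derive_phi by auto.
  apply (is_derive_ext (fun y => beta p * exp (-y) * Wf p y)).
  intros t. symmetry. apply phi_eq; auto. apply is_derive_psi; auto.
Qed.

Lemma Derive_phi_odd p x : 1 < p -> Derive (phi p) (-x) = - Derive (phi p) x.
Proof.
  intros Hp.
  assert (H : is_derive (fun y => phi p (-y)) x (scal (-1) (Derive (phi p) (-x)))).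
  { apply (is_derive_comp (phi p) Ropp x). apply is_derive_phi; auto.
    apply (is_derive_ext (fun y => - y)). intros; reflexivity.
    auto_derive. auto. ring. }
  rewrite (Derive_ext (phi p) (fun y => phi p (-y)) x) by (intros; symmetry; apply phi_even).
  replace (Derive (fun y => phi p (-y)) x) with (scal (-1) (Derive (phi p) (-x))).
  2:{ symmetry. apply is_derive_unique. exact H. }
  unfold scal; simpl; unfold mult; simpl. ring.
Qed.

Lemma Lambda_even p x : 1 < p -> Lambda_phi p (-x) = Lambda_phi p x.
Proof.
  intros Hp. unfold Lambda_phi. rewrite Derive_phi_odd, phi_even by auto. ring.
Qed.

Theorem mainTheorem12 (p delta : R) (mu1 mu2 mu3 : R -> R) (m1 m3 : R -> R -> R) :
  1 < p < 5 -> 0 < delta ->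
  root_branches delta mu1 mu2 mu3 ->
  (forall l, Rabs l < delta -> is_m1 p mu1 mu2 mu3 l (fun x => m1 x l)) ->
  (forall l, Rabs l < delta -> is_m3 p mu1 mu2 mu3 l (fun x => m3 x l)) ->
  let f1 := fun x l => exp (mu1 l * x) * m1 x l in
  let f3 := fun x l => exp (mu3 l * x) * m3 x l in
  forall x : R,
    f1 x 0 = - / beta p * Derive (phi p) x /\
    f3 (- x) 0 = - / beta p * Derive (phi p) x /\
    is_derive (fun l => f1 x l) 0
      (/ beta p * (1 / (p - 1) * Derive (phi p) x + Lambda_phi p x)) /\
    is_derive (fun l => f3 x l) 0
      (/ beta p * (1 / (p - 1) * Derive (phi p) x - Lambda_phi p x)).
Proof.
  intros [Hp _] Hd Hrb Hm1 Hm3 f1 f3 x.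
  pose proof Hrb as [H1 [H2 [H3 _]]].
  destruct (m1_main p delta mu1 mu2 mu3 m1 Hp Hd Hrb Hm1) as [A1 B1].
  destruct (f1_result p mu1 m1 x Hp H1 (mu1_der delta mu1 mu2 mu3 Hd Hrb) A1 B1) as [F1 D1].
  set (n1 := fun l => - mu3 (-l)). set (n2 := fun l => - mu2 (-l)). set (n3 := fun l => - mu1 (-l)).
  set (m' := fun x l => m3 (-x) (-l)).
  assert (Hrb' : root_branches delta n1 n2 n3) by (apply refl_rb; auto).
  assert (Hm' : forall l, Rabs l < delta -> is_m1 p n1 n2 n3 l (fun x => m' x l)).
  { intros l Hl. apply refl_m1. apply Hm3. rewrite Rabs_Ropp; auto. }
  destruct (m1_main p delta n1 n2 n3 m' Hp Hd Hrb' Hm') as [A3 B3].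
  assert (Hn1 : n1 0 = -1) by (unfold n1; rewrite Ropp_0, H3; ring).
  pose proof (mu1_der delta n1 n2 n3 Hd Hrb') as Dn1.
  destruct (f1_result p n1 m' x Hp Hn1 Dn1 A3 B3) as [F3 _].
  destruct (f1_result p n1 m' (-x) Hp Hn1 Dn1 A3 B3) as [_ D3].
  split; [exact F1|]. split.
  { unfold f3. rewrite <- F3. unfold n1, m'. rewrite Ropp_0. f_equal. f_equal. ring. }
  split; [exact D1|].
  rewrite Derive_phi_odd, Lambda_even in D3 by auto.
  pose proof (is_derive_comp (fun l => exp (n1 l * - x) * m' (- x) l) Ropp 0
     (/ beta p * (1 / (p - 1) * - Derive (phi p) x + Lambda_phi p x)) (-1)) as Hc.
  rewrite Ropp_0 in Hc. specialize (Hc D3).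
  assert (Ho : is_derive Ropp 0 (-1)).
  { apply (is_derive_ext (fun y => - y)). intros; reflexivity.
    auto_derive. auto. ring. }
  specialize (Hc Ho).
  eapply is_derive_ext; [|
  match type of Hc with is_derive _ _ ?v =>
    replace (/ beta p * (1 / (p - 1) * Derive (phi p) x - Lambda_phi p x)) with v;
    [exact Hc|unfold scal; simpl; unfold mult; simpl; ring] end].
  intros t. unfold f3, n1, m'. simpl. rewrite !Ropp_involutive. f_equal. f_equal. ring.
Qed.
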